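(* Let $U\in\mathbb{R}^{n\times d}$, let $\mathbf{x}_*\in\mathbb{R}^d$ be an $s$-sparse signal, and let $\mathbf{y}=U\mathbf{x}_*$ (noiseless measurements). Assume $U$ satisfies \[ \gamma := \delta_s + \sqrt{2}\,\theta_{s,s} + \delta_{3s} < 1 . \] Let $\Delta_1,\Delta_2,\ldots$ be a sequence with $\|\mathbf{x}_1-\mathbf{x}_*\|_2\le \Delta_1$ and $\Delta_{t+1} = (\delta_s+\sqrt{2}\theta_{s,s}+\delta_{3s})\Delta_t$. If Algorithm 1 is run with $\lambda_t = \frac{\delta_s+\sqrt{2}\theta_{s,s}}{\sqrt{s}}\Delta_t$, then for all $t\ge 0$: (i) $|\mathcal{S}_{t+1}\setminus \mathcal{S}_*|\le s$, and (ii) $\|\mathbf{x}_{t+1}-\mathbf{x}_*\|_2\le \gamma^t\Delta_1$.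
   Context: For $\mathbf{x}\in\mathbb{R}^d$, $\mathcal{S}(\mathbf{x})=\{i:[\mathbf{x}]_i\neq 0\}$ is its support; $\mathbf{x}$ is $s$-sparse if $|\mathcal{S}(\mathbf{x})|\le s$. For $\mathcal T\subseteq\{1,\dots,d\}$, $U_{\mathcal T}$ is the submatrix of $U$ with columns indexed by $\mathcal T$. The restricted isometry constant $\delta_s\ge0$ is the smallest constant such that for every $\mathcal T$ with $|\mathcal T|\le s$ and every $\mathbf{v}\in\mathbb{R}^{|\mathcal T|}$, $(1-\delta_s)\|\mathbf{v}\|_2^2\le\|U_{\mathcal T}\mathbf{v}\|_2^2\le(1+\delta_s)\|\mathbf{v}\|_2^2$. The restricted orthogonality constant $\theta_{s,s}$ (with $2s\le d$) is the smallest constant such that for all disjoint $\mathcal T,\mathcal T'$ with $|\mathcal T|,|\mathcal T'|\le s$ and all $\mathbf{v}\in\mathbb{R}^{|\mathcal T|},\mathbf{v}'\in\mathbb{R}^{|\mathcal T'|}$, $|\langle U_{\mathcal T}\mathbf{v},U_{\mathcal T'}\mathbf{v}'\rangle|\le\theta_{s,s}\|\mathbf{v}\|_2\|\mathbf{v}'\|_2$. Algorithm 1 (homotopy proximal mapping): given $U$, $\mathbf{y}$ and parameters $\lambda_1,\lambda_2,\ldots>0$, set $\mathbf{x}_1=0$ and for $t=1,2,\ldots$ compute $\widehat{\mathbf{x}}_t=\mathbf{x}_t-U^\top(U\mathbf{x}_t-\mathbf{y})$ and $\mathbf{x}_{t+1}=\mathrm{sign}(\widehat{\mathbf{x}}_t)[|\widehat{\mathbf{x}}_t|-\lambda_t]_+$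 (componentwise soft-thresholding; equivalently $\mathbf{x}_{t+1}=\arg\min_{\mathbf{x}}\frac12\|\mathbf{x}-\widehat{\mathbf{x}}_t\|_2^2+\lambda_t\|\mathbf{x}\|_1$). $\mathcal{S}_t=\mathcal{S}(\mathbf{x}_t)$ and $\mathcal{S}_*=\mathcal{S}(\mathbf{x}_* )$. *)

(* Defs.v *)
From HB Require Import structures.
From mathcomp Require Import all_boot all_order all_algebra.
From mathcomp Require Import reals.
Set Implicit Arguments. Unset Strict Implicit. Unset Printing Implicit Defensive.
Import Order.TTheory GRing.Theory Num.Theory.
Local Open Scope ring_scope.

Section Defs.
Variable R : realType.

Definition sqnorm m (v : 'cV[R]_m) : R := \sum_(i < m) v i 0 ^+ 2.
Definition norm2 m (v : 'cV[R]_m) : R := Num.sqrt (sqnorm v).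
Definition dotv m (a b : 'cV[R]_m) : R := \sum_(i < m) a i 0 * b i 0.

Definition supp d (x : 'cV[R]_d) : {set 'I_d} := [set i | x i 0 != 0].

(* U_T : the submatrix of U with columns indexed by T (in increasing order) *)
Definition colsubT n d (U : 'M[R]_(n, d)) (T : {set 'I_d}) : 'M[R]_(n, #|T|) :=
  colsub (fun k : 'I_#|T| => enum_val k) U.

Definition rip_ok n d (U : 'M[R]_(n, d)) (s : nat) (delta : R) : Prop :=
  0 <= delta /\
  forall T : {set 'I_d}, (#|T| <= s)%N ->
    forall v : 'cV[R]_#|T|,
      (1 - delta) * sqnorm v <= sqnorm (colsubT U T *m v) /\
      sqnorm (colsubT U T *m v) <= (1 + delta) * sqnorm v.

Definition is_RIC n d (U : 'M[R]_(n, d)) (s : nat) (delta : R) : Prop :=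
  rip_ok U s delta /\ forall delta', rip_ok U s delta' -> delta <= delta'.

Definition roc_ok n d (U : 'M[R]_(n, d)) (s : nat) (theta : R) : Prop :=
  0 <= theta /\
  forall T T' : {set 'I_d}, (#|T| <= s)%N -> (#|T'| <= s)%N -> [disjoint T & T'] ->
    forall (v : 'cV[R]_#|T|) (v' : 'cV[R]_#|T'|),
      `| dotv (colsubT U T *m v) (colsubT U T' *m v') | <= theta * norm2 v * norm2 v'.

Definition is_ROC n d (U : 'M[R]_(n, d)) (s : nat) (theta : R) : Prop :=
  roc_ok U s theta /\ forall theta', roc_ok U s theta' -> theta <= theta'.

Definition soft d (x : 'cV[R]_d) (lam : R) : 'cV[R]_d :=
  \col_i (Num.sg (x i 0) * Num.max (`|x i 0| - lam) 0).

Definition hpm_step n d (U : 'M[R]_(n, d)) (y : 'cV[R]_n) (lam : R) (x : 'cV[R]_d)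
  : 'cV[R]_d := soft (x - U^T *m (U *m x - y)) lam.

(* Algorithm 1 with paper indexing: hpm 1 = x_1 = 0 and
   hpm (t+1) = x_{t+1} computed with lambda_t = lam t, for t >= 1.
   (hpm 0 := 0 is a dummy value, never used in the statement.) *)
Fixpoint hpm n d (U : 'M[R]_(n, d)) (y : 'cV[R]_n) (lam : nat -> R) (t : nat)
  : 'cV[R]_d :=
  match t with
  | 0 => 0
  | 1 => 0
  | t'.+1 => hpm_step U y (lam t') (hpm U y lam t')
  end.

End Defs.

(* Main.v *)
Require Import Defs.
From HB Require Import structures.
From mathcomp Require Import all_boot all_order all_algebra.
From mathcomp Require Import reals ring lra zify.
Import Order.TTheory GRing.Theory Num.Theory.
Local Open Scope ring_scope.
Set Implicit Arguments. Unset Strict Implicit.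

Section Aux.
Variable R : realType.

Lemma dotvC m (a b : 'cV[R]_m) : dotv a b = dotv b a.
Proof. by apply: eq_bigr => i _; rewrite mulrC. Qed.
Lemma dotvDl m (a b c : 'cV[R]_m) : dotv (a + b) c = dotv a c + dotv b c.
Proof. rewrite /dotv -big_split; apply: eq_bigr => i _; by rewrite mxE mulrDl. Qed.
Lemma dotvZl m k (a b : 'cV[R]_m) : dotv (k *: a) b = k * dotv a b.
Proof. rewrite /dotv mulr_sumr; apply: eq_bigr => i _; by rewrite mxE mulrA. Qed.
Lemma dotvNl m (a b : 'cV[R]_m) : dotv (- a) b = - dotv a b.
Proof. rewrite /dotv -sumrN; apply: eq_bigr => i _; by rewrite mxE mulNr. Qed.
Lemma dotvBl m (a b c : 'cV[R]_m) : dotv (a - b) c = dotv a c - dotv b c.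
Proof. by rewrite dotvDl dotvNl. Qed.
Lemma dotvDr m (a b c : 'cV[R]_m) : dotv c (a + b) = dotv c a + dotv c b.
Proof. by rewrite dotvC dotvDl !(dotvC c). Qed.
Lemma dotvBr m (a b c : 'cV[R]_m) : dotv c (a - b) = dotv c a - dotv c b.
Proof. by rewrite dotvC dotvBl !(dotvC c). Qed.
Lemma dotvNr m (a b : 'cV[R]_m) : dotv a (- b) = - dotv a b.
Proof. by rewrite dotvC dotvNl dotvC. Qed.
Lemma dotvZr m k (a b : 'cV[R]_m) : dotv a (k *: b) = k * dotv a b.
Proof. by rewrite dotvC dotvZl dotvC. Qed.
Lemma sqnormE m (a : 'cV[R]_m) : sqnorm a = dotv a a.
Proof. by apply: eq_bigr => i _; rewrite expr2. Qed.
Lemma sqnorm_ge0 m (a : 'cV[R]_m) : 0 <= sqnorm a.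
Proof. by apply: sumr_ge0 => i _; rewrite sqr_ge0. Qed.
Lemma norm2_ge0 m (a : 'cV[R]_m) : 0 <= norm2 a.
Proof. exact: sqrtr_ge0. Qed.
Lemma norm2_sqr m (a : 'cV[R]_m) : norm2 a ^+ 2 = sqnorm a.
Proof. by rewrite sqr_sqrtr // sqnorm_ge0. Qed.
Lemma norm2_eq0 m (a : 'cV[R]_m) : norm2 a = 0 -> a = 0.
Proof.
move=> /eqP; rewrite sqrtr_eq0 => h.
have h0 : sqnorm a = 0 by apply/eqP; rewrite eq_le h sqnorm_ge0.
apply/matrixP => i j; rewrite [j]ord1 mxE.
have /psumr_eq0P := h0; move=> /(_ (fun i _ => sqr_ge0 _)) /(_ i isT) /eqP.
by rewrite sqrf_eq0 => /eqP.
Qed.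
Lemma dotv_trmx n d (U : 'M[R]_(n,d)) (a : 'cV[R]_d) (b : 'cV[R]_n) :
  dotv a (U^T *m b) = dotv (U *m a) b.
Proof.
rewrite /dotv.
under eq_bigr => i _ do rewrite mxE mulr_sumr.
rewrite exchange_big /=; apply: eq_bigr => j _.
rewrite mxE mulr_suml; apply: eq_bigr => i _; rewrite !mxE; ring.
Qed.
Lemma lesq (p K : R) : 0 <= p -> 0 <= K -> p ^+ 2 <= p * K -> p <= K.
Proof. move=> h1 h2 h3; nra. Qed.

Lemma supp0 d (x : 'cV[R]_d) (W : {set 'I_d}) i :
  supp x \subset W -> i \notin W -> x i 0 = 0.
Proof.
move=> /subsetP sW iW; apply/eqP; apply: contraNT iW => h; apply: sW.
by rewrite inE.
Qed.

Definition sub_of d (T : {set 'I_d}) (x : 'cV[R]_d) : 'cV[R]_#|T| :=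
  \col_k x (enum_val k) 0.

Lemma sum_transfer d (T : {set 'I_d}) (F : 'I_d -> R) :
  (forall j, j \notin T -> F j = 0) ->
  \sum_(k < #|T|) F (enum_val k) = \sum_j F j.
Proof.
move=> hF; rewrite -(big_enum_val F) /= [RHS](bigID (mem T)) /=.
by rewrite [X in _ = _ + X]big1 ?addr0 // => j /hF.
Qed.

Lemma colsubT_sub n d (U : 'M[R]_(n,d)) (T : {set 'I_d}) x :
  supp x \subset T -> colsubT U T *m sub_of T x = U *m x.
Proof.
move=> sx; apply/matrixP => i j; rewrite [j]ord1 !mxE.
under eq_bigr => k _ do rewrite !mxE.
rewrite /colsubT.
have hF : forall l, l \notin T -> U i l * x l 0 = 0 by move=> l /(supp0 sx) ->; rewrite mulr0.
rewrite -(sum_transfer hF).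
by [].
Qed.

Lemma sqnorm_sub d (T : {set 'I_d}) x :
  supp x \subset T -> sqnorm (sub_of T x) = sqnorm x.
Proof.
move=> sx; rewrite /sqnorm; under eq_bigr => k _ do rewrite mxE.
have hF : forall l, l \notin T -> x l 0 ^+ 2 = 0 by move=> l /(supp0 sx) ->; rewrite expr0n.
by rewrite -(sum_transfer hF).
Qed.

Lemma norm2_sub d (T : {set 'I_d}) x :
  supp x \subset T -> norm2 (sub_of T x) = norm2 x.
Proof. by move=> sx; rewrite /norm2 sqnorm_sub. Qed.

Lemma rip_full n d (U : 'M[R]_(n,d)) k dl : rip_ok U k dl ->
  forall W : {set 'I_d}, (#|W| <= k)%N -> forall x, supp x \subset W ->
  `|dotv x x - dotv (U *m x) (U *m x)| <= dl * sqnorm x.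
Proof.
case=> _ H W hW x sx; have := H W hW (sub_of W x).
rewrite colsubT_sub // sqnorm_sub // -!sqnormE => -[h1 h2].
rewrite ler_norml; apply/andP; split; lra.
Qed.

Lemma roc_full n d (U : 'M[R]_(n,d)) k th : roc_ok U k th ->
  forall T T' : {set 'I_d}, (#|T| <= k)%N -> (#|T'| <= k)%N -> [disjoint T & T'] ->
  forall x x', supp x \subset T -> supp x' \subset T' ->
  `|dotv (U *m x) (U *m x')| <= th * norm2 x * norm2 x'.
Proof.
case=> _ H T T' h1 h2 hd x x' sx sx'; have := H T T' h1 h2 hd (sub_of T x) (sub_of T' x').
by rewrite !colsubT_sub // !norm2_sub.
Qed.

Lemma suppD d (W : {set 'I_d}) (a b : 'cV[R]_d) :
  supp a \subset W -> supp b \subset W -> supp (a + b) \subset W.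
Proof.
move=> sa sb; apply/subsetP => i; rewrite inE mxE; apply: contraNT => iW.
by rewrite (supp0 sa) // (supp0 sb) // addr0.
Qed.
Lemma suppZ d (W : {set 'I_d}) k (a : 'cV[R]_d) :
  supp a \subset W -> supp (k *: a) \subset W.
Proof.
move=> sa; apply/subsetP => i; rewrite inE mxE; apply: contraNT => iW.
by rewrite (supp0 sa) // mulr0.
Qed.
Lemma suppN d (W : {set 'I_d}) (a : 'cV[R]_d) :
  supp a \subset W -> supp (- a) \subset W.
Proof. by move=> sa; rewrite -scaleN1r suppZ. Qed.

Lemma dotv0l m (b : 'cV[R]_m) : dotv 0 b = 0.
Proof. by rewrite /dotv big1 // => i _; rewrite mxE mul0r. Qed.
Lemma dotv0r m (b : 'cV[R]_m) : dotv b 0 = 0.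
Proof. by rewrite dotvC dotv0l. Qed.

Lemma rip_bil n d (U : 'M[R]_(n,d)) k dl : rip_ok U k dl ->
  forall W : {set 'I_d}, (#|W| <= k)%N -> forall u v, supp u \subset W -> supp v \subset W ->
  `|dotv u v - dotv (U *m u) (U *m v)| <= dl * norm2 u * norm2 v.
Proof.
move=> hr W hW u v su sv.
have dl0 : 0 <= dl by case: hr.
have Q := rip_full hr hW.
have hp := norm2_ge0 u; have hq := norm2_ge0 v.
have [p0|pn0] := eqVneq (norm2 u) 0.
  by rewrite (norm2_eq0 p0) mulmx0 !dotv0l subrr normr0 !mulr_ge0 // norm2_ge0.
have [q0|qn0] := eqVneq (norm2 v) 0.
  by rewrite (norm2_eq0 q0) mulmx0 !dotv0r subrr normr0 !mulr_ge0 // norm2_ge0.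
set p := norm2 u in hp pn0 *; set q := norm2 v in hq qn0 *.
set B := fun a b : 'cV[R]_d => dotv a b - dotv (U *m a) (U *m b).
pose u1 := q *: u; pose v1 := p *: v.
have hB : B u1 v1 = q * p * B u v.
  by rewrite /B /u1 /v1 -!scalemxAr !dotvZl !dotvZr; ring.
have hpol : 4 * B u1 v1 = B (u1+v1) (u1+v1) - B (u1-v1) (u1-v1).
  rewrite /B mulmxDr mulmxBr !dotvDl !dotvDr ?dotvNl ?dotvNr (dotvC v1 u1).
  rewrite (dotvC (U *m v1) (U *m u1)); ring.
have hpar : sqnorm (u1+v1) + sqnorm (u1-v1) = 2 * (sqnorm u1 + sqnorm v1).
  rewrite !sqnormE !dotvDl !dotvDr ?dotvNl ?dotvNr (dotvC v1 u1); ring.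
have hu1 : sqnorm u1 = q^+2 * p^+2.
  by rewrite /u1 sqnormE dotvZl dotvZr -sqnormE -norm2_sqr -/p; ring.
have hv1 : sqnorm v1 = q^+2 * p^+2.
  by rewrite /v1 sqnormE dotvZl dotvZr -sqnormE -norm2_sqr -/q; ring.
have s1 : supp (u1 + v1) \subset W by apply: suppD; apply: suppZ.
have s2 : supp (u1 - v1) \subset W by apply: suppD; [apply: suppZ|apply/suppN/suppZ].
have h1 := Q _ s1; have h2 := Q _ s2.
have key : q * p * `|B u v| <= q * p * (dl * p * q).
  have e : q * p * `|B u v| = `|B u1 v1| by rewrite hB normrM ger0_norm // mulr_ge0.
  rewrite e.
  have : `|4 * B u1 v1| <= dl * sqnorm (u1 + v1) + dl * sqnorm (u1 - v1).
    rewrite hpol; apply: (le_trans (ler_normB _ _)); exact: lerD.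
  rewrite normrM ger0_norm // -mulrDr hpar hu1 hv1 => h.
  have -> : q * p * (dl * p * q) = dl * (q^+2 * p^+2) by ring.
  lra.
rewrite ler_pM2l in key; first by rewrite -/B.
by rewrite mulr_gt0 // lt_def ?qn0 ?pn0.
Qed.

Definition sft (a l : R) := Num.sg a * Num.max (`|a| - l) 0.

Lemma sft_cases (a l : R) (P : R -> Prop) :
  (a = 0 -> P 0) ->
  (0 < a -> a <= l -> P 0) -> (0 < a -> l < a -> P (a - l)) ->
  (a < 0 -> - a <= l -> P 0) -> (a < 0 -> l < - a -> P (a + l)) ->
  P (sft a l).
Proof.
move=> h0 h1 h2 h3 h4; rewrite /sft maxEle.
have [a0|a0|a0] := ltgtP a 0.
- rewrite ltr0_sg // ltr0_norm //; case: ifP => h.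
    by rewrite mulr0; apply: h3 => //; lra.
  have -> : -1 * (- a - l) = a + l by ring.
  by apply: h4 => //; move/negbT: h; rewrite -ltNge; lra.
- rewrite gtr0_sg // gtr0_norm //; case: ifP => h.
    by rewrite mulr0; apply: h1 => //; lra.
  rewrite mul1r; by apply: h2 => //; move/negbT: h; rewrite -ltNge; lra.
- by rewrite a0 sgr0 mul0r; apply: h0.
Qed.

Lemma sft_nz (a l : R) : sft a l != 0 -> l < `|a|.
Proof.
apply: (@sft_cases a l (fun z => z != 0 -> l < `|a|)); rewrite ?eqxx //.
- by move=> h1 h2 _; rewrite gtr0_norm.
- by move=> h1 h2 _; rewrite ltr0_norm.
Qed.

Lemma sft_prod (a l : R) : 0 <= l -> sft a l * (sft a l - a) <= 0.
Proof.
move=> l0; apply: (@sft_cases a l (fun z => z * (z - a) <= 0)); rewrite ?mul0r //;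
  move=> h1 h2; nra.
Qed.

Lemma sft_dist (a l : R) : 0 <= l -> `|sft a l - a| <= l.
Proof.
move=> l0; apply: (@sft_cases a l (fun z => `|z - a| <= l)).
- by move=> ->; rewrite subrr normr0.
- by move=> h1 h2; rewrite sub0r normrN gtr0_norm.
- by move=> h1 h2; rewrite addrC addKr normrN ger0_norm.
- by move=> h1 h2; rewrite sub0r normrN ltr0_norm.
- by move=> h1 h2; rewrite addrC addKr ger0_norm.
Qed.

Lemma soft_entry d (x : 'cV[R]_d) l i : soft x l i 0 = sft (x i 0) l.
Proof. by rewrite mxE. Qed.

Definition restr d (W : {set 'I_d}) (x : 'cV[R]_d) : 'cV[R]_d :=
  \col_i (if i \in W then x i 0 else 0).

Lemma supp_restr d (W : {set 'I_d}) x : supp (restr W x) \subset W.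
Proof.
apply/subsetP => i; rewrite inE mxE; by case: ifP => // _; rewrite eqxx.
Qed.

Lemma dotv_restr d (W : {set 'I_d}) z : dotv (restr W z) z = sqnorm (restr W z).
Proof.
rewrite /dotv /sqnorm; apply: eq_bigr => i _; rewrite !mxE.
by case: ifP; rewrite ?mul0r ?expr0n // expr2.
Qed.

Lemma sqnorm_restr2 d (A B : {set 'I_d}) z : [disjoint A & B] ->
  sqnorm (restr A z) + sqnorm (restr B z) <= sqnorm z.
Proof.
move=> dAB; rewrite /sqnorm -big_split; apply: ler_sum => i _; rewrite !mxE.
case: ifP => iA; case: ifP => iB /=; rewrite ?expr0n /= ?addr0 ?add0r ?sqr_ge0 //.
by have := disjointFr dAB iA; rewrite iB.
Qed.

Lemma sqnorm_restr_le d (A : {set 'I_d}) z : sqnorm (restr A z) <= sqnorm z.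
Proof.
have dA0 : [disjoint A & set0] by rewrite disjoint_sym -setI_eq0 set0I.
have := sqnorm_restr2 z dA0.
have := sqnorm_ge0 (restr set0 z); lra.
Qed.

Lemma dotv_disj d (A B : {set 'I_d}) (a b : 'cV[R]_d) :
  supp a \subset A -> supp b \subset B -> [disjoint A & B] -> dotv a b = 0.
Proof.
move=> sa sb dAB; rewrite /dotv big1 // => i _.
case iA: (i \in A); last by rewrite (supp0 sa) ?iA // mul0r.
by rewrite (supp0 sb) ?mulr0 // (disjointFr dAB iA).
Qed.

Lemma sum_cs d (A : {set 'I_d}) (F : 'I_d -> R) :
  (\sum_(i in A) F i) ^+ 2 <= #|A|%:R * \sum_(i in A) F i ^+ 2.
Proof.
set S := \sum_(i in A) F i ^+ 2.
rewrite expr2 mulr_suml.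
under eq_bigr => i _ do rewrite mulr_sumr.
apply: (@le_trans _ _ (\sum_(i in A) \sum_(j in A) (F i ^+ 2 / 2 + F j ^+ 2 / 2))).
  apply: ler_sum => i _; apply: ler_sum => j _.
  have := sqr_ge0 (F i - F j); rewrite !expr2; lra.
under eq_bigr => i _ do rewrite big_split /= sumr_const -mulr_suml -/S.
rewrite big_split /= sumr_const sumrMnl.
have -> : \sum_(i in A) F i ^+ 2 / 2 = S / 2 by rewrite /S mulr_suml.
by rewrite -mulrnDl -splitr mulr_natl.
Qed.

Lemma disj_of d (A B : {set 'I_d}) :
  (forall i, i \in A -> i \in B -> False) -> [disjoint A & B].
Proof.
move=> H; rewrite disjoints_subset; apply/subsetP => i iA; rewrite inE.
by apply/negP => iB; exact: H i iA iB.
Qed.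

Lemma sq_mono (a b : R) : 0 <= a -> 0 <= b -> a ^+ 2 <= b ^+ 2 -> a <= b.
Proof. move=> *; nra. Qed.

Lemma sq_le (a b : R) : 0 <= a -> a <= b -> a ^+ 2 <= b ^+ 2.
Proof. move=> *; nra. Qed.

Lemma norm2_restr_le d (A : {set 'I_d}) z : norm2 (restr A z) <= norm2 z.
Proof. by rewrite /norm2 ler_sqrt ?sqnorm_ge0 // sqnorm_restr_le. Qed.

Lemma bound_i n d s (U : 'M[R]_(n,d)) (xs x : 'cV[R]_d) ds th (T : {set 'I_d}) :
  (#|supp xs| <= s)%N -> rip_ok U s ds -> roc_ok U s th ->
  (#|supp x :\: supp xs| <= s)%N -> (#|T| <= s)%N -> [disjoint T & supp xs] ->
  norm2 (restr T ((x - xs) - U^T *m (U *m (x - xs))))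
    <= (ds + Num.sqrt 2 * th) * norm2 (x - xs).
Proof.
move=> hs rs ro hx hT TS.
have ds0 : 0 <= ds by case: rs.
have th0 : 0 <= th by case: ro.
set Ss := supp xs in hs hx TS *.
set e := x - xs.
set P2 := (supp x :\: Ss) :\: T.
set e1 := restr T e; set e2 := restr Ss e; set e3 := restr P2 e.
have TP2 : [disjoint T & P2].
  by apply: disj_of => i iT; rewrite /P2 !in_setD iT.
have SP2 : [disjoint Ss & P2].
  by apply: disj_of => i iS; rewrite /P2 !in_setD iS /= andbF.
have hP2 : (#|P2| <= s)%N.
  by apply: leq_trans hx; apply: subset_leq_card; apply: subsetDl.
have he : e = e1 + e2 + e3.
  apply/matrixP => i j; rewrite [j]ord1 !mxE.
  case iT: (i \in T).
    have -> : (i \in Ss) = false by apply: (disjointFr TS iT).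
    by rewrite (disjointFr TP2 iT) !addr0.
  case iS: (i \in Ss).
    by rewrite (disjointFr SP2 iS) add0r addr0.
  rewrite /P2 !in_setD iT iS /= add0r add0r [i \in supp x]inE.
  case: ifP => // /negbT; rewrite negbK => /eqP ->.
  have : i \notin Ss by rewrite iS.
  by rewrite /Ss inE negbK => /eqP ->; rewrite subrr.
set y := restr T (e - U^T *m (U *m e)).
have hy : norm2 y ^+ 2 = dotv y (e - U^T *m (U *m e)) by rewrite norm2_sqr dotv_restr.
have sy : supp y \subset T by apply: supp_restr.
have hdot : dotv y (e - U^T *m (U *m e)) =
   (dotv y e1 - dotv (U *m y) (U *m e1)) + (dotv y e2 - dotv (U *m y) (U *m e2))
   + (dotv y e3 - dotv (U *m y) (U *m e3)).
  by rewrite dotvBr dotv_trmx he !mulmxDr !dotvDr; ring.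
have z2 : dotv y e2 = 0 by apply: (dotv_disj sy (supp_restr _ _) TS).
have z3 : dotv y e3 = 0 by apply: (dotv_disj sy (supp_restr _ _) TP2).
have b1 := rip_bil rs hT sy (supp_restr T e).
have b2 := roc_full ro hT hs TS sy (supp_restr Ss e).
have b3 := roc_full ro hT hP2 TP2 sy (supp_restr P2 e).
rewrite -/e1 -/e2 -/e3 in b1 b2 b3.
have ny0 := norm2_ge0 y.
have n10 := norm2_ge0 e1; have n20 := norm2_ge0 e2; have n30 := norm2_ge0 e3.
have key : norm2 y <= ds * norm2 e1 + th * (norm2 e2 + norm2 e3).
  apply: lesq => //; first by rewrite addr_ge0 ?mulr_ge0 // addr_ge0.
  rewrite hy hdot z2 z3.
  move: b1 b2 b3; rewrite !ler_norml => /andP[b1 b1'] /andP[b2 b2'] /andP[b3 b3'].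
  lra.
have h1 : norm2 e1 <= norm2 e by apply: norm2_restr_le.
have h23 : norm2 e2 + norm2 e3 <= Num.sqrt 2 * norm2 e.
  apply: sq_mono; rewrite ?addr_ge0 ?mulr_ge0 ?sqrtr_ge0 ?norm2_ge0 //.
  rewrite exprMn sqr_sqrtr // !norm2_sqr.
  have := sqnorm_restr2 e SP2; rewrite -!norm2_sqr -/e2 -/e3.
  have := sqr_ge0 (norm2 e2 - norm2 e3); lra.
have := ler_wpM2l ds0 h1; have := ler_wpM2l th0 h23; lra.
Qed.

Lemma bound_ii n d s (U : 'M[R]_(n,d)) (xs x x' : 'cV[R]_d) d3 (l : R) :
  0 <= l -> rip_ok U (3 * s) d3 ->
  (#|supp xs| <= s)%N -> (#|supp x :\: supp xs| <= s)%N ->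
  (#|supp x' :\: supp xs| <= s)%N ->
  (forall i, x' i 0 = sft ((x - U^T *m (U *m x - U *m xs)) i 0) l) ->
  norm2 (x' - xs) <= d3 * norm2 (x - xs) + l * Num.sqrt s%:R.
Proof.
move=> l0 r3 hs hx hx' hent.
have d30 : 0 <= d3 by case: r3.
set Ss := supp xs in hs hx hx' *.
set W3 := Ss :|: (supp x :\: Ss) :|: (supp x' :\: Ss).
have hW : (#|W3| <= 3 * s)%N.
  rewrite /W3 cardsU; apply: leq_trans (leq_subr _ _) _.
  rewrite cardsU; apply: (@leq_trans (#|Ss| + #|supp x :\: Ss| + #|supp x' :\: Ss|)).
    by rewrite leq_add2r leq_subr.
  by move: hs hx hx'; lia.
have sW : forall z : 'cV[R]_d, supp z \subset supp z :\: Ss :|: Ss.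
  move=> z; apply/subsetP => i iz; rewrite !in_setU !in_setD iz andbT.
  by case: (i \in Ss).
set e := x - xs; set e' := x' - xs.
have se : supp e \subset W3.
  apply/subsetP => i; rewrite /W3 !in_setU !in_setD [i \in supp e]inE !mxE.
  case iS: (i \in Ss) => //=.
  have : i \notin Ss by rewrite iS.
  by rewrite /Ss inE negbK => /eqP ->; rewrite subr0 [i \in supp x]inE => ->.
have se' : supp e' \subset W3.
  apply/subsetP => i; rewrite /W3 !in_setU !in_setD [i \in supp e']inE !mxE.
  case iS: (i \in Ss) => //=.
  have : i \notin Ss by rewrite iS.
  by rewrite /Ss inE negbK => /eqP ->; rewrite subr0 [i \in supp x']inE => ->; rewrite orbT.
set xh := x - U^T *m (U *m x - U *m xs).
set w := e - U^T *m (U *m e).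
have hw : forall i, w i 0 = xh i 0 - xs i 0.
  by move=> i; rewrite /xh /w /e -mulmxBr !mxE; ring.
have b1 := rip_bil r3 hW se' se.
have hsplit : dotv e' e' = (dotv e' e - dotv (U *m e') (U *m e)) + dotv e' (e' - w).
  by rewrite (dotvBr e' w e') (dotvBr e (U^T *m (U *m e)) e') dotv_trmx; ring.
have hsum : dotv e' (e' - w) <= l * \sum_(i in Ss) `|e' i 0|.
  rewrite /dotv mulr_sumr [X in _ <= X]big_mkcond /=; apply: ler_sum => i _.
  rewrite [(e' - w) i 0]mxE [(- w) i 0]mxE hw.
  have -> : e' i 0 + - (xh i 0 - xs i 0) = x' i 0 - xh i 0 by rewrite /e' mxE [(- xs) i 0]mxE; ring.
  case: ifP => iS.
    apply: (le_trans (ler_norm _)); rewrite normrM mulrC ler_wpM2r //.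
    by rewrite hent sft_dist.
  have : i \notin Ss by rewrite iS.
  rewrite /Ss inE negbK => /eqP hxs.
  by rewrite /e' mxE [(- xs) i 0]mxE hxs subr0 hent sft_prod.
have hcs : \sum_(i in Ss) `|e' i 0| <= Num.sqrt s%:R * norm2 e'.
  apply: sq_mono; rewrite ?mulr_ge0 ?sqrtr_ge0 ?norm2_ge0 ?sumr_ge0 //.
  apply: (le_trans (sum_cs _ _)).
  rewrite exprMn sqr_sqrtr ?ler0n // norm2_sqr.
  apply: ler_pM; rewrite ?ler0n ?sumr_ge0 //; first by move=> i _; apply: sqr_ge0.
    by rewrite ler_nat.
  rewrite /sqnorm [X in _ <= X](bigID (mem Ss)) /= -[X in X <= _]addr0 lerD //.
    by apply: ler_sum => i _; rewrite real_normK // num_real.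
  by apply: sumr_ge0 => i _; apply: sqr_ge0.
have ne0 := norm2_ge0 e'; have ne := norm2_ge0 e.
apply: lesq => //; first by rewrite addr_ge0 ?mulr_ge0 ?sqrtr_ge0.
rewrite norm2_sqr sqnormE hsplit.
move: b1; rewrite ler_norml => /andP[_ b1].
have := ler_wpM2l l0 hcs.
lra.
Qed.

Lemma step n d s (U : 'M[R]_(n,d)) (xs x : 'cV[R]_d) (ds th d3 D l : R) :
  (0 < s)%N -> (#|supp xs| <= s)%N ->
  rip_ok U s ds -> roc_ok U s th -> rip_ok U (3*s) d3 ->
  (#|supp x :\: supp xs| <= s)%N ->
  norm2 (x - xs) <= D ->
  l = (ds + Num.sqrt 2 * th) / Num.sqrt s%:R * D ->
  (#|supp (hpm_step U (U *m xs) l x) :\: supp xs| <= s)%N /\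
  norm2 (hpm_step U (U *m xs) l x - xs) <= (ds + Num.sqrt 2 * th + d3) * D.
Proof.
move=> s0 hs rs ro r3 hx hD hl.
have ds0 : 0 <= ds by case: rs.
have th0 : 0 <= th by case: ro.
have d30 : 0 <= d3 by case: r3.
have c0 : 0 <= ds + Num.sqrt 2 * th by rewrite addr_ge0 ?mulr_ge0 ?sqrtr_ge0.
have D0 : 0 <= D := le_trans (norm2_ge0 _) hD.
have sq0 : 0 < Num.sqrt (s%:R : R) by rewrite sqrtr_gt0 ltr0n.
have l0 : 0 <= l by rewrite hl !mulr_ge0 // invr_ge0 ltW.
have hls : l * Num.sqrt s%:R = (ds + Num.sqrt 2 * th) * D.
  by rewrite hl; field; rewrite gt_eqF.
have hent : forall i, hpm_step U (U *m xs) l x i 0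
    = sft ((x - U^T *m (U *m x - U *m xs)) i 0) l.
  by move=> i; rewrite /hpm_step mxE.
have hw : forall i, ((x - xs) - U^T *m (U *m (x - xs))) i 0
    = (x - U^T *m (U *m x - U *m xs)) i 0 - xs i 0.
  by move=> i; rewrite -mulmxBr !mxE; ring.
have hi : (#|supp (hpm_step U (U *m xs) l x) :\: supp xs| <= s)%N.
  set T0 := [set i | (i \notin supp xs) && (l < `|(x - U^T *m (U *m x - U *m xs)) i 0|)].
  have sub0 : supp (hpm_step U (U *m xs) l x) :\: supp xs \subset T0.
    apply/subsetP => i; rewrite in_setD => /andP[iS].
    rewrite [i \in supp _]inE hent => nz.
    by rewrite /T0 in_set iS /= sft_nz.
  apply: leq_trans (subset_leq_card sub0) _.
  rewrite leqNgt; apply/negP => hlt.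
  have /card_geqP [sq [uq sz ssub]] : (s <= #|T0|)%N by apply: ltnW.
  pose T := [set i in sq].
  have cT : #|T| = s by rewrite cardsE; move/card_uniqP: uq => ->.
  have TT0 : forall i, i \in T -> i \in T0 by move=> i; rewrite inE => /ssub.
  have TS : [disjoint T & supp xs].
    apply: disj_of => i /TT0; rewrite inE => /andP[h _] h'.
    by rewrite h' in h.
  have hT : (#|T| <= s)%N by rewrite cT.
  have hb := bound_i hs rs ro hx hT TS.
  set w := (x - xs) - U^T *m (U *m (x - xs)) in hb hw.
  have ub : norm2 (restr T w) <= (ds + Num.sqrt 2 * th) * D.
    apply: le_trans hb _; exact: ler_wpM2l.
  have lb : s%:R * l ^+ 2 < sqnorm (restr T w).
    have -> : sqnorm (restr T w) = \sum_(i in T) (w i 0) ^+ 2.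
      rewrite /sqnorm [RHS]big_mkcond; apply: eq_bigr => i _; rewrite mxE.
      by case: ifP => // _; rewrite expr0n.
    have -> : s%:R * l ^+ 2 = \sum_(i in T) l ^+ 2 by rewrite sumr_const cT mulr_natl.
    apply: ltr_sum.
      have /card_gt0P [i0 i0T] : (0 < #|T|)%N by rewrite cT.
      by apply/hasP; exists i0; rewrite ?mem_index_enum.
    move=> i /TT0; rewrite inE => /andP[iS hli].
    rewrite hw.
    have : i \notin supp xs by [].
    rewrite inE negbK => /eqP ->; rewrite subr0.
    rewrite -[X in _ < X]real_normK ?num_real //.
    have := normr_ge0 ((x - U^T *m (U *m x - U *m xs)) i 0).
    move: hli; set a := `|_|; move=> *; nra.
  have : sqnorm (restr T w) <= ((ds + Num.sqrt 2 * th) * D) ^+ 2.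
    rewrite -norm2_sqr; apply: sq_le => //; exact: norm2_ge0.
  rewrite -hls exprMn sqr_sqrtr ?ler0n //.
  move: lb; lra.
split => //.
have := bound_ii l0 r3 hs hx hi hent.
rewrite hls => h; apply: le_trans h _.
have := ler_wpM2l d30 hD; lra.
Qed.
End Aux.

Unset Implicit Arguments.
Set Strict Implicit.

Theorem theorem1 (R : realType) (n d s : nat) (U : 'M[R]_(n, d))
  (xs : 'cV[R]_d) (y : 'cV[R]_n)
  (delta_s theta_ss delta_3s : R) (Delta lam : nat -> R) :
  (0 < s)%N -> (2 * s <= d)%N ->
  (#|supp xs| <= s)%N ->
  y = U *m xs ->
  is_RIC U s delta_s -> is_ROC U s theta_ss -> is_RIC U (3 * s) delta_3s ->
  delta_s + Num.sqrt 2 * theta_ss + delta_3s < 1 ->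
  norm2 (hpm U y lam 1 - xs) <= Delta 1%N ->
  (forall t, (1 <= t)%N ->
     Delta t.+1 = (delta_s + Num.sqrt 2 * theta_ss + delta_3s) * Delta t) ->
  (forall t, (1 <= t)%N ->
     lam t = (delta_s + Num.sqrt 2 * theta_ss) / Num.sqrt s%:R * Delta t) ->
  forall t : nat,
    (#|supp (hpm U y lam t.+1) :\: supp xs| <= s)%N /\
    norm2 (hpm U y lam t.+1 - xs)
      <= (delta_s + Num.sqrt 2 * theta_ss + delta_3s) ^+ t * Delta 1%N.
Proof.
move=> s0 _ hs hy [rs _] [ro _] [r3 _] _ h1 hD hl.
set g := delta_s + Num.sqrt 2 * theta_ss + delta_3s.
suff H : forall t, [/\ (#|supp (hpm U y lam t.+1) :\: supp xs| <= s)%N,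
    norm2 (hpm U y lam t.+1 - xs) <= g ^+ t * Delta 1%N &
    Delta t.+1 = g ^+ t * Delta 1%N].
  by move=> t; case: (H t).
elim=> [|t [IH1 IH2 IH3]].
  split; rewrite ?expr0 ?mul1r //.
  have -> : supp (hpm U y lam 1) = set0.
    by apply/setP => i; rewrite !inE mxE eqxx.
  by rewrite set0D cards0.
have -> : hpm U y lam t.+2 = hpm_step U y (lam t.+1) (hpm U y lam t.+1) by [].
rewrite hy.
have hn : norm2 (hpm U y lam t.+1 - xs) <= Delta t.+1 by rewrite IH3.
have [A B] := step s0 hs rs ro r3 IH1 hn (hl t.+1 isT).
rewrite -hy in A B *.
have eD : Delta t.+2 = g ^+ t.+1 * Delta 1%N by rewrite hD // IH3 exprS mulrA.
split => //; by rewrite -eD hD.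
Qed.
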